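(* If $G_1$ and $G_2$ are topological Abelian groups with property $\mathfrak{h}$, then $G_1\times G_2$ has property $\mathfrak{h}$. Consequently the class of topological Abelian groups with property $\mathfrak{h}$ is closed under finite products.
   Context: $\mathbb{T}$ is the circle group. A subgroup $N$ of a topological Abelian group $G$ is $h$-embedded in $G$ if every group homomorphism $N\to\mathbb{T}$ extends to a continuous homomorphism $G\to\mathbb{T}$. $G$ has property $\mathfrak{h}$ if every countable subgroup of $G$ is $h$-embedded in $G$. *)

(* Defs.v *)
From HB Require Import structures.
From mathcomp Require Import all_boot all_order all_algebra.
From mathcomp Require Import all_classical all_reals all_analysis.
Set Implicit Arguments. Unset Strict Implicit. Unset Printing Implicit Defensive.
Import Order.TTheory GRing.Theory Num.Theory.
Import numFieldTopology.Exports.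
Local Open Scope classical_set_scope.
Local Open Scope ring_scope.

(* The circle group T, realised as the unit circle {(a,b) | a^2+b^2 = 1}
   in R x R (product topology), with complex multiplication as group law. *)
Definition on_circle (R : realType) (z : R * R) : Prop :=
  z.1 ^+ 2 + z.2 ^+ 2 = 1.

Definition circ_mul (R : realType) (z w : R * R) : R * R :=
  (z.1 * w.1 - z.2 * w.2, z.1 * w.2 + z.2 * w.1).

Definition is_subgroup (G : zmodType) (N : set G) : Prop :=
  N 0 /\ (forall x y, N x -> N y -> N (x - y)).

Definition char_on (R : realType) (G : zmodType) (N : set G) (f : G -> R * R)
  : Prop :=
  (forall x, N x -> on_circle (f x)) /\
  (forall x y, N x -> N y -> f (x + y) = circ_mul (f x) (f y)).

Definition h_embedded (R : realType) (G : PreTopologicalZmodule.type)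
  (N : set G) : Prop :=
  forall f : G -> R * R, char_on N f ->
    exists chi : G -> R * R,
      [/\ continuous chi, char_on setT chi & forall x, N x -> chi x = f x].

Definition prop_h (R : realType) (G : PreTopologicalZmodule.type) : Prop :=
  forall N : set G, is_subgroup N -> countable N -> h_embedded R N.

Definition prodG (G1 G2 : topologicalZmodType) : Type := (G1 * G2)%type.
HB.instance Definition _ (G1 G2 : topologicalZmodType) :=
  GRing.Zmodule.on (prodG G1 G2).
HB.instance Definition _ (G1 G2 : topologicalZmodType) :=
  Topological.on (prodG G1 G2).

(* Main.v *)
Require Import Defs.
From mathcomp Require Import all_boot all_order all_algebra.
From mathcomp Require Import all_classical all_reals all_analysis.
From mathcomp Require Import ring.
Import Order.TTheory GRing.Theory Num.Theory.
Import numFieldTopology.Exports.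
Local Open Scope classical_set_scope.
Local Open Scope ring_scope.

Section Circ.
Variable R : realType.
Definition cconj (z : R * R) : R * R := (z.1, - z.2).
Definition cone : R * R := (1, 0).

Lemma cmC (z w : R * R) : circ_mul z w = circ_mul w z.
Proof. case: z => a b; case: w => c d; rewrite /circ_mul /=; congr (_, _); ring. Qed.

Lemma cmA (z w u : R * R) : circ_mul z (circ_mul w u) = circ_mul (circ_mul z w) u.
Proof. case: z => a b; case: w => c d; case: u => e f; rewrite /circ_mul /=; congr (_, _); ring. Qed.

Lemma cm1 (z : R * R) : circ_mul z cone = z.
Proof. case: z => a b; rewrite /circ_mul /cone /=; congr (_, _); ring. Qed.

Lemma cconjM (z w : R * R) : cconj (circ_mul z w) = circ_mul (cconj z) (cconj w).
Proof. case: z => a b; case: w => c d; rewrite /circ_mul /cconj /=; congr (_, _); ring. Qed.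

Lemma cmV (z : R * R) : on_circle z -> circ_mul z (cconj z) = cone.
Proof.
case: z => a b; rewrite /on_circle /circ_mul /cconj /cone /= => h.
congr (_, _); last ring. by rewrite -h; ring.
Qed.

Lemma circ_mulP (z w : R * R) : on_circle z -> on_circle w -> on_circle (circ_mul z w).
Proof.
case: z => a b; case: w => c d; rewrite /on_circle /circ_mul /= => h1 h2.
have -> : (a * c - b * d) ^+ 2 + (a * d + b * c) ^+ 2 = (a ^+ 2 + b ^+ 2) * (c ^+ 2 + d ^+ 2) by ring.
by rewrite h1 h2 mulr1.
Qed.

Lemma cconjP (z : R * R) : on_circle z -> on_circle (cconj z).
Proof. case: z => a b; rewrite /on_circle /cconj /= => h; by rewrite sqrrN. Qed.

Lemma cm_cont (T : topologicalType) (p q : T -> R * R) :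
  continuous p -> continuous q -> continuous (fun x => circ_mul (p x) (q x)).
Proof.
move=> cp cq x; rewrite /circ_mul.
have c1 : forall r : T -> R * R, continuous r -> (r y).1 @[y --> x] --> (r x).1.
  by move=> r cr; exact: (cvg_comp _ _ (cr x) (@cvg_fst R R (nbhs (r x).1) (nbhs (r x).2) _)).
have c2 : forall r : T -> R * R, continuous r -> (r y).2 @[y --> x] --> (r x).2.
  by move=> r cr; exact: (cvg_comp _ _ (cr x) (@cvg_snd R R (nbhs (r x).1) (nbhs (r x).2) _)).
have hB : ((p y).1 * (q y).1 - (p y).2 * (q y).2) @[y --> x] --> ((p x).1 * (q x).1 - (p x).2 * (q x).2).
  by apply: cvgB; apply: cvgM; [apply: c1|apply: c1|apply: c2|apply: c2].
have hD : ((p y).1 * (q y).2 + (p y).2 * (q y).1) @[y --> x] --> ((p x).1 * (q x).2 + (p x).2 * (q x).1).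
  by apply: cvgD; apply: cvgM; [apply: c1|apply: c2|apply: c2|apply: c1].
exact: (cvg_pair hB hD).
Qed.
End Circ.
Arguments cconj {R}. Arguments cone {R}. Arguments cmC {R}. Arguments cmA {R}. Arguments cm1 {R}.
Arguments cconjM {R}. Arguments cmV {R}. Arguments circ_mulP {R}. Arguments cconjP {R}. Arguments cm_cont {R T}.

Lemma cmACA (R : realType) (a b c d : R * R) :
  circ_mul (circ_mul a b) (circ_mul c d) = circ_mul (circ_mul a c) (circ_mul b d).
Proof. by rewrite -!cmA; congr circ_mul; rewrite cmA (cmC b c) -cmA. Qed.

Lemma pairD (G1 G2 : topologicalZmodType) (a a' : G1) (b b' : G2) :
  (((a, b) : prodG G1 G2) + ((a', b') : prodG G1 G2)) = ((a + a', b + b') : prodG G1 G2).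
Proof. by []. Qed.

Lemma pairB (G1 G2 : topologicalZmodType) (a a' : G1) (b b' : G2) :
  (((a, b) : prodG G1 G2) - ((a', b') : prodG G1 G2)) = ((a - a', b - b') : prodG G1 G2).
Proof. by []. Qed.

Lemma pair0 (G1 G2 : topologicalZmodType) : (0 : prodG G1 G2) = ((0, 0) : prodG G1 G2).
Proof. by []. Qed.

Theorem proposition2p4 (R : realType) (G1 G2 : topologicalZmodType) :
  prop_h R G1 -> prop_h R G2 -> prop_h R (prodG G1 G2).
Proof.
move=> h1 h2 N [N0 NB] cN f [fc fm].
have ND : forall x y, N x -> N y -> N (x + y).
  move=> x y Nx Ny; have Nny : N (- y) by rewrite -sub0r; apply: NB.
  by rewrite -(opprK y); apply: NB.
pose M2 := [set b : G2 | N ((0, b) : prodG G1 G2)].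
have M2sub : is_subgroup M2.
  split; first by rewrite /M2 /= -pair0.
  move=> b c Hb Hc; rewrite /M2 /=.
  by have := NB _ _ Hb Hc; rewrite pairB subrr.
have M2c : countable M2.
  apply: sub_countable cN; apply: card_le_trans (card_image_le snd N).
  apply: subset_card_le => b Hb; by exists ((0, b) : prodG G1 G2).
pose f2 := fun b : G2 => f ((0, b) : prodG G1 G2).
have f2c : char_on M2 f2.
  split; first by move=> b Hb; apply: fc.
  move=> b c Hb Hc; rewrite /f2 -fm // pairD addr0 //.
have [chi2 [c2c [c2o c2m] c2e]] := h2 M2 M2sub M2c f2 f2c.
pose g := fun x : prodG G1 G2 => circ_mul (f x) (cconj (chi2 x.2)).
have gc : forall x, N x -> on_circle (g x).
  by move=> x Nx; apply: circ_mulP; [apply: fc | apply: cconjP; apply: c2o].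
have gm : forall x y, N x -> N y -> g (x + y) = circ_mul (g x) (g y).
  move=> x y Nx Ny; rewrite /g fm // c2m // cconjM cmACA //.
have g0 : forall c, N ((0, c) : prodG G1 G2) -> g ((0, c) : prodG G1 G2) = cone.
  move=> c Nc; rewrite /g /= c2e //; apply: cmV; exact: fc.
have gw : forall a b b', N ((a, b) : prodG G1 G2) -> N ((a, b') : prodG G1 G2) ->
    g ((a, b) : prodG G1 G2) = g ((a, b') : prodG G1 G2).
  move=> a b b' Nb Nb'.
  have Nd : N ((0, b - b') : prodG G1 G2) by have := NB _ _ Nb Nb'; rewrite pairB subrr.
  have -> : ((a, b) : prodG G1 G2) = ((a, b') : prodG G1 G2) + ((0, b - b') : prodG G1 G2).
    by rewrite pairD addr0 addrC subrK.
  by rewrite gm // g0 // cm1.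
pose N1 := [set x.1 | x in N].
have N1sub : is_subgroup N1.
  split; first by exists 0.
  move=> a a' [x Nx <-] [y Ny <-]; exists (x - y); first exact: NB.
  by [].
have N1c : countable N1.
  by apply: sub_countable cN; apply: card_image_le.
pose sel := fun a : G1 => xget 0 [set b : G2 | N ((a, b) : prodG G1 G2)].
have selP : forall a, N1 a -> N ((a, sel a) : prodG G1 G2).
  move=> a [x Nx <-]; apply: (@xgetI _ 0 [set b : G2 | N ((x.1, b) : prodG G1 G2)] x.2).
  by case: x Nx.
pose hh := fun a : G1 => g ((a, sel a) : prodG G1 G2).
have hhc : char_on N1 hh.
  split; first by move=> a Ha; apply: gc; apply: selP.
  move=> a a' Ha Ha'; rewrite /hh.
  have Ns : N ((a + a', sel a + sel a') : prodG G1 G2).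
    by rewrite -pairD; apply: ND; apply: selP.
  have Ha2 : N1 (a + a') by exists ((a + a', sel a + sel a') : prodG G1 G2).
  rewrite (gw _ _ _ (selP _ Ha2) Ns) -pairD gm //; exact: selP.
have [psi [pc [po pm] pe]] := h1 N1 N1sub N1c hh hhc.
exists (fun x : prodG G1 G2 => circ_mul (psi x.1) (chi2 x.2)); split.
- apply: cm_cont => x.
  + exact: (cvg_comp _ _ (@cvg_fst G1 G2 (nbhs x.1) (nbhs x.2) _) (pc x.1)).
  + exact: (cvg_comp _ _ (@cvg_snd G1 G2 (nbhs x.1) (nbhs x.2) _) (c2c x.2)).
- split; first by move=> x _; apply: circ_mulP; [apply: po | apply: c2o].
  by move=> x y _ _; rewrite /= pm // c2m // cmACA.
- move=> [a b] Nx /=.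
  have Ha : N1 a by exists ((a, b) : prodG G1 G2).
  rewrite pe // /hh (gw _ _ _ (selP _ Ha) Nx) /g /= -cmA (cmC _ (chi2 b)) cmV ?cm1 //.
  exact: c2o.
Qed.
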